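(* Let $\Lambda=KQ/I$ be a finite dimensional string algebra over a field $K$ whose quiver $Q$ has a tree as underlying graph, and let $i\in Q_0$ be a vertex at which exactly one arrow starts. Then $P(i)\cong C(\iota)$, where $\iota:\operatorname{rad}P(i)\hookrightarrow P(i)$ is the inclusion.
   Context: $K$ is a field, $Q$ a finite quiver with vertex set $Q_0$ and arrows $Q_1$, paths written right to left. $\Lambda=KQ/I$ with $I$ either $0$ or an admissible ideal, and $\Lambda$ is a string algebra: (i) at each vertex at most two arrows start and at most two end; (ii) if $\alpha\neq\beta,\gamma$ are arrows with $e(\alpha)=e(\beta)=s(\gamma)$ then $\gamma\alpha\in I$ or $\gamma\beta\in I$; (iii) if $\alpha\neq\beta,\gamma$ are arrows with $s(\alpha)=s(\beta)=e(\gamma)$ then $\alpha\gamma\in I$ or $\beta\gamma\in I$; (iv) $I$ is generated by paths. $\operatorname{mod}\Lambda$ is the category of finitely generated left $\Lambda$-modules, $\tau$ the Auslander–Reiten translation, $P(i)$ the indecomposable projective module at $i$. For $f:B\to C$ write $B=B_1\oplus B_2$ with $B_1\subseteq\operatorname{Ker}f$ and $f|_{B_2}$ right minimal; $\operatorname{Ker}(f|_{B_2})$ is the intrinsic kernel of $f$. An indecomposable projective $P$ almost factors through $f:M\to N$ if there are $h:P\to N$ and $g:\operatorname{rad}P\to M$ with $h|_{\operatorname{rad}P}=fg$ and $\operatorname{Im}h\not\subseteq\operatorname{Im}f$. The minimal right determiner $C(f)$ is the direct sum of the modules $\tau^{-1}L$, $L$ running over the indecomposable direct summands of the intrinsic kernel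 of $f$, and of the indecomposable projective modules almost factoring through $f$, one from each isomorphism class. *)

(* Defs.v *)
(* Finite-dimensional modules over a monomial bound quiver
   algebra KQ/I, represented as quiver representations with matrices
   (row-vector convention: an element x of M_{s a} is sent to x *m mor M a). *)
From HB Require Import structures.
From mathcomp Require Import all_boot all_algebra.
Set Implicit Arguments. Unset Strict Implicit. Unset Printing Implicit Defensive.
Import GRing.Theory.
Local Open Scope ring_scope.

Record quiver := Quiver {
  vert : finType; arr : finType;
  src : arr -> vert; tgt : arr -> vert }.

Section Quiver.
Variable Q : quiver.
Local Notation V := (vert Q).
Local Notation A := (arr Q).

(* p = [:: a1; ...; an] is a path traversing a1 first, from u to w
   (in the paper's right-to-left notation this is the path an ... a1). *)
Fixpoint is_path (u w : V) (p : seq A) : bool :=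
  match p with
  | [::] => u == w
  | a :: p' => (src a == u) && is_path (tgt a) w p'
  end.

(* The ideal I is generated by the paths in [rels]; a path lies in I iff it
   contains a generating path as a contiguous subpath. *)
Definition inI (rels : seq (seq A)) (p : seq A) : bool :=
  has (fun r => infix r p) rels.

(* rels generates an ideal I that is 0 or admissible: generators are paths of
   length >= 2 (finite dimensionality is automatic for trees). *)
Definition valid_rels (rels : seq (seq A)) : Prop :=
  forall r, r \in rels -> (1 < size r)%N /\ exists u w, is_path u w r.

(* Conditions (i)-(iii) of a string algebra; (iv) holds by construction. *)
Definition string_alg (rels : seq (seq A)) : Prop :=
  [/\ (forall v : V, #|[set a : A | src a == v]| <= 2)%N,
      (forall v : V, #|[set a : A | tgt a == v]| <= 2)%N,
      (forall al be ga : A, al != be -> tgt al = tgt be -> tgt be = src ga ->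
          inI rels [:: al; ga] || inI rels [:: be; ga])
    & (forall al be ga : A, al != be -> src al = src be -> src be = tgt ga ->
          inI rels [:: ga; al] || inI rels [:: ga; be])].

Definition adj : rel V := fun u w =>
  [exists a : A, ((src a == u) && (tgt a == w)) || ((src a == w) && (tgt a == u))].

Definition is_tree : Prop :=
  (forall u w : V, connect adj u w) /\ #|V| = #|A|.+1.

Section Rep.
Variable K : fieldType.
Variable rels : seq (seq A).

Record rep := Rep {
  dim : V -> nat;
  mor : forall a : A, 'M[K]_(dim (src a), dim (tgt a)) }.

Definition cast_id (M : rep) (u w : V) : 'M[K]_(dim M u, dim M w) :=
  match u =P w with
  | ReflectT e => castmx (erefl, congr1 (dim M) e) (1%:M : 'M[K]_(dim M u))
  | ReflectF _ => 0
  end.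

Definition mor' (M : rep) (u w : V) (a : A) : 'M[K]_(dim M u, dim M w) :=
  match src a =P u, tgt a =P w with
  | ReflectT e1, ReflectT e2 => castmx (congr1 (dim M) e1, congr1 (dim M) e2) (mor M a)
  | _, _ => 0
  end.

Fixpoint pathmx (M : rep) (u w : V) (p : seq A) : 'M[K]_(dim M u, dim M w) :=
  match p with
  | [::] => cast_id M u w
  | a :: p' => mor' M u (tgt a) a *m pathmx M (tgt a) w p'
  end.

Definition isMod (M : rep) : Prop :=
  forall r u w, r \in rels -> is_path u w r -> pathmx M u w r = 0.

Definition hom (M N : rep) := forall v : V, 'M[K]_(dim M v, dim N v).
Definition is_hom (M N : rep) (f : hom M N) : Prop :=
  forall a : A, mor M a *m f (tgt a) = f (src a) *m mor N a.
Definition hcomp (M N P : rep) (f : hom M N) (g : hom N P) : hom M P :=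
  fun v => f v *m g v.

Definition zero_rep : rep := @Rep (fun _ => 0%N) (fun a => 0).
Definition is_zero (M : rep) : Prop := forall v, dim M v = 0%N.
Definition dsum (M N : rep) : rep :=
  @Rep (fun v => dim M v + dim N v)%N (fun a => block_mx (mor M a) 0 0 (mor N a)).
Definition bigsum (Ms : seq rep) : rep := foldr dsum zero_rep Ms.

Definition iso_map (M N : rep) (f : hom M N) : Prop :=
  is_hom f /\ exists g : hom N M,
    [/\ is_hom g, forall v, f v *m g v = 1%:M & forall v, g v *m f v = 1%:M].
Definition iso (M N : rep) : Prop := exists f : hom M N, iso_map f.

Definition indec (M : rep) : Prop :=
  [/\ isMod M, ~ is_zero M &
      forall X Y, isMod X -> isMod Y -> iso M (dsum X Y) -> is_zero X \/ is_zero Y].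

Definition mono (M N : rep) (f : hom M N) : Prop := forall v, row_free (f v).
Definition epi (M N : rep) (f : hom M N) : Prop := forall v, row_full (f v).
Definition split_mono (M N : rep) (f : hom M N) : Prop :=
  exists r : hom N M, is_hom r /\ forall v, f v *m r v = 1%:M.
Definition split_epi (M N : rep) (f : hom M N) : Prop :=
  exists s : hom N M, is_hom s /\ forall v, s v *m f v = 1%:M.

Definition injective_mod (M : rep) : Prop :=
  isMod M /\ forall X (f : hom M X), isMod X -> is_hom f -> mono f -> split_mono f.

Definition almost_split (L E N : rep) (u : hom L E) (p : hom E N) : Prop :=
  [/\ [/\ isMod L, isMod E, isMod N, is_hom u & is_hom p],
      [/\ mono u, epi p & forall v, (u v == kermx (p v))%MS],
      [/\ indec L, indec N & ~ split_mono u],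
      (forall X (h : hom L X), isMod X -> is_hom h -> ~ split_mono h ->
          exists k : hom E X, is_hom k /\ forall v, u v *m k v = h v)
    & (forall X (h : hom X N), isMod X -> is_hom h -> ~ split_epi h ->
          exists k : hom X E, is_hom k /\ forall v, k v *m p v = h v)].

Definition tauinv (L N : rep) : Prop :=
  isMod N /\
  ((injective_mod L /\ is_zero N) \/
   exists E (u : hom L E) (p : hom E N), almost_split u p).

Definition right_minimal (B C : rep) (f : hom B C) : Prop :=
  forall phi : hom B B, is_hom phi -> (forall v, phi v *m f v = f v) ->
    forall v, phi v \in unitmx.

Definition inl_h (B1 B2 : rep) : hom B1 (dsum B1 B2) := fun v => row_mx 1%:M 0.
Definition inr_h (B1 B2 : rep) : hom B2 (dsum B1 B2) := fun v => row_mx 0 1%:M.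

Definition intr_ker (B C : rep) (f : hom B C) (Kk : rep) : Prop :=
  exists B1 B2 (th : hom (dsum B1 B2) B),
    [/\ [/\ isMod B1, isMod B2 & iso_map th],
        (forall v, hcomp (@inl_h B1 B2) (hcomp th f) v = 0),
        right_minimal (hcomp (@inr_h B1 B2) (hcomp th f)) &
        isMod Kk /\ exists k : hom Kk B2,
          [/\ is_hom k, mono k &
              forall v, (k v == kermx (hcomp (@inr_h B1 B2) (hcomp th f) v))%MS]].

(* indecomposable projectives: P(j) = Lambda e_j with basis the paths starting
   at j not in I (tree quivers have no paths of length > #|A|), and its
   radical spanned by the nontrivial such paths *)
Fixpoint allseqs (n : nat) : seq (seq A) :=
  match n with
  | 0 => [:: [::]]
  | n'.+1 => [::] :: [seq a :: p | a <- enum A, p <- allseqs n']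
  end.

Definition basisP (rad : bool) (j v : V) : seq (seq A) :=
  [seq p <- allseqs #|A| | [&& is_path j v p, ~~ inI rels p & (~~ rad) || (p != [::])]].

Definition prep (rad : bool) (j : V) : rep :=
  @Rep (fun v => size (basisP rad j v))
    (fun a => \matrix_(x, y)
       ((nth [::] (basisP rad j (tgt a)) y == rcons (nth [::] (basisP rad j (src a)) x) a)%:R)).

Definition Pj (j : V) : rep := prep false j.
Definition radP (j : V) : rep := prep true j.
Definition rad_incl (j : V) : hom (radP j) (Pj j) := fun v =>
  \matrix_(x, y) ((nth [::] (basisP true j v) x == nth [::] (basisP false j v) y)%:R).

Definition almost_factors (j : V) (B C : rep) (f : hom B C) : Prop :=
  exists (h : hom (Pj j) C) (g : hom (radP j) B),
    [/\ is_hom h, is_hom g, (forall v, rad_incl j v *m h v = g v *m f v)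
      & ~ (forall v, (h v <= f v)%MS)].

Definition all_indec (Ls : seq rep) : Prop :=
  forall k, (k < size Ls)%N -> indec (nth zero_rep Ls k).

Definition isC (B C : rep) (f : hom B C) (M : rep) : Prop :=
  exists Kk, intr_ker f Kk /\
  exists (Ls Ns : seq rep) (J : seq V),
    [/\ [/\ all_indec Ls, size Ns = size Ls &
          forall k, (k < size Ls)%N -> tauinv (nth zero_rep Ls k) (nth zero_rep Ns k)],
        iso Kk (bigsum Ls),
        uniq J,
        (forall j, j \in J <-> almost_factors j f)
      & iso M (dsum (bigsum Ns) (bigsum [seq Pj j | j <- J]))].

End Rep.
End Quiver.

(* Main.v *)
From HB Require Import structures.
From mathcomp Require Import all_boot all_algebra.
Require Import Defs.
Import Defs.
Set Implicit Arguments. Unset Strict Implicit. Unset Printing Implicit Defensive.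
Import GRing.Theory.
Local Open Scope ring_scope.

Section S.
Variable Q : quiver.
Variable K : fieldType.
Variable rels : seq (seq (arr Q)).
Local Notation A := (arr Q).
Local Notation V := (vert Q).

Lemma mem_allseqs n (p : seq A) : (p \in allseqs Q n) = (size p <= n)%N.
Proof.
elim: n p => [|n IH] [|a p] /=.
- by [].
- by rewrite inE.
- by rewrite inE eqxx.
rewrite inE /=; apply/allpairsP/idP.
  by case=> [[b q]] /= [_ Hq [_ ->]]; rewrite ltnS -IH.
move=> H; exists (a, p); split => //=; first by rewrite mem_enum.
by rewrite IH -ltnS.
Qed.

Lemma uniq_allseqs n : uniq (allseqs Q n).
Proof.
elim: n => [|n IH] //=.
apply/andP; split.
  by apply/allpairsP => [[[b q]]] /= [_ _].
apply: allpairs_uniq => //; first exact: enum_uniq.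
by move=> [b q] [c r] _ _ /= [-> ->].
Qed.

Lemma mem_basisP rad j v p :
  (p \in basisP rels rad j v) =
  [&& (size p <= #|A|)%N, is_path j v p, ~~ inI rels p & (~~ rad) || (p != [::])].
Proof. rewrite mem_filter mem_allseqs. by case: (size p <= _)%N; rewrite ?andbT ?andbF. Qed.

Lemma uniq_basisP rad j v : uniq (basisP rels rad j v).
Proof. exact/filter_uniq/uniq_allseqs. Qed.

Lemma is_path_rcons u w (p : seq A) a :
  is_path u w (rcons p a) = is_path u (src a) p && (tgt a == w).
Proof.
elim: p u => [|b p IH] u /=; first by rewrite eq_sym; case: eqP.
by rewrite IH andbA.
Qed.

Lemma is_path_cat u w (p q : seq A) :
  is_path u w (p ++ q) -> exists x, is_path u x p /\ is_path x w q.
Proof.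
elim: p u => [|b p IH] u /=; first by move=> H; exists u; rewrite eqxx.
case/andP=> -> /IH [x [H1 H2]]; by exists x; rewrite H1.
Qed.

Lemma inI_infix p s : inI rels p -> infix p s -> inI rels s.
Proof. by case/hasP=> r Hr Hrp Hps; apply/hasP; exists r => //; exact: infix_trans Hps. Qed.

Lemma basis_prefix rad j w (p : seq A) a t :
  (rcons p a ++ t) \in basisP rels rad j w -> rcons p a \in basisP rels rad j (tgt a).
Proof.
rewrite !mem_basisP => /and4P [Hs Hp HI _].
apply/and4P; split.
- by apply: leq_trans Hs; rewrite size_cat leq_addr.
- case/is_path_cat: Hp => x [Hx _].
  move: Hx; rewrite !is_path_rcons => /andP [H1 _]. by rewrite H1 eqxx.
- by apply: contra HI => H; apply: inI_infix H _; exact: prefix_infix.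
- by rewrite -size_eq0 size_rcons orbT.
Qed.

Lemma nil_notin_rels : valid_rels rels -> ~~ inI rels [::].
Proof.
move=> Hv; apply/hasPn => r Hr; rewrite infixs0.
by case: (Hv r Hr); case: r {Hr}.
Qed.


Lemma mor'_eq (M : rep Q K) a : mor' M (src a) (tgt a) a = mor M a.
Proof.
rewrite /mor'; case: (src a =P src a) => [e1|]; last by [].
case: (tgt a =P tgt a) => [e2|]; last by [].
by rewrite castmx_id.
Qed.

Lemma cast_id_eq (M : rep Q K) u : cast_id M u u = 1%:M.
Proof. by rewrite /cast_id; case: (u =P u) => [e|] //; rewrite castmx_id. Qed.

Lemma rd_in (s : seq (seq A)) q (z : 'I_(size s)) : uniq s -> nth [::] s z = q ->
  \row_(y < size s) ((nth [::] s y == q)%:R : K) = delta_mx 0 z.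
Proof.
move=> Hu <-; apply/rowP => y; rewrite !mxE nth_uniq //=.
Qed.

Lemma rd_out (s : seq (seq A)) q : q \notin s ->
  \row_(y < size s) ((nth [::] s y == q)%:R : K) = 0.
Proof.
move=> H; apply/rowP => y; rewrite !mxE; case: eqP => // e.
by have := mem_nth [::] (ltn_ord y); rewrite e (negbTE H).
Qed.

Lemma row_mor rad j a (x : 'I_(size (basisP rels rad j (src a)))) :
  row x (mor (prep K rels rad j) a) =
  \row_(y < size (basisP rels rad j (tgt a)))
     ((nth [::] (basisP rels rad j (tgt a)) y == rcons (nth [::] (basisP rels rad j (src a)) x) a)%:R).
Proof. by apply/rowP => y; rewrite !mxE. Qed.

Lemma row_path rad j p : forall u w (x : 'I_(size (basisP rels rad j u))), is_path u w p ->
  row x (pathmx (prep K rels rad j) u w p) =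
  \row_(y < size (basisP rels rad j w))
     ((nth [::] (basisP rels rad j w) y == nth [::] (basisP rels rad j u) x ++ p)%:R).
Proof.
elim: p => [|a p IH] u w x /=.
  move/eqP => e; subst w; rewrite cast_id_eq cats0.
  by apply/rowP => y; rewrite !mxE nth_uniq ?uniq_basisP // eq_sym.
case/andP => /eqP e Hp; subst u.
rewrite mor'_eq row_mul row_mor.
case: (boolP (rcons (nth [::] (basisP rels rad j (src a)) x) a \in basisP rels rad j (tgt a))) => H.
  have Hz : (index (rcons (nth [::] (basisP rels rad j (src a)) x) a) (basisP rels rad j (tgt a))
              < size (basisP rels rad j (tgt a)))%N by rewrite index_mem.
  rewrite (rd_in (z := Ordinal Hz)) ?uniq_basisP ?nth_index //.
  by rewrite -rowE IH //= nth_index // cat_rcons.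
rewrite (rd_out H) mul0mx rd_out //; apply/negP; rewrite -cat_rcons => /basis_prefix.
by rewrite (negbTE H).
Qed.

Lemma isMod_prep rad j : isMod rels (prep K rels rad j).
Proof.
move=> r u w Hr Hp; apply/row_matrixP => x.
rewrite row_path // row0; apply/rowP => y; rewrite !mxE; case: eqP => // e.
have := mem_nth [::] (ltn_ord y); rewrite e mem_basisP => /and4P [_ _ HI _].
by case/negP: HI; apply/hasP; exists r => //; exact: suffix_infix.
Qed.


Lemma basis_prefix2 j w (p : seq A) a :
  rcons p a \in basisP rels false j w -> p \in basisP rels false j (src a).
Proof.
rewrite !mem_basisP => /and4P [Hs Hp HI _].
apply/and4P; split => //.
- by apply: leq_trans Hs; rewrite size_rcons.
- by move: Hp; rewrite is_path_rcons => /andP [].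
- by apply: contra HI => H; apply: inI_infix H _; exact: infix_rcons.
Qed.

Lemma row_rad i v (x : 'I_(size (basisP rels true i v))) :
  exists z : 'I_(size (basisP rels false i v)),
  row x (rad_incl K rels i v) = delta_mx 0 z /\
  nth [::] (basisP rels false i v) z = nth [::] (basisP rels true i v) x.
Proof.
have Hm : nth [::] (basisP rels true i v) x \in basisP rels false i v.
  by move: (mem_nth [::] (ltn_ord x)); rewrite !mem_basisP => /and4P [-> -> -> _].
have Hz : (index (nth [::] (basisP rels true i v) x) (basisP rels false i v)
           < size (basisP rels false i v))%N by rewrite index_mem.
exists (Ordinal Hz); split; last by rewrite /= nth_index.
rewrite -(@rd_in _ (nth [::] (basisP rels true i v) x) (Ordinal Hz)) ?uniq_basisP ?nth_index //.
by apply/rowP => y; rewrite !mxE eq_sym.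
Qed.

Lemma rad_row_free i v : row_free (rad_incl K rels i v).
Proof.
apply/row_freeP.
exists (\matrix_(y < size (basisP rels false i v), z < size (basisP rels true i v))
          ((nth [::] (basisP rels false i v) y == nth [::] (basisP rels true i v) z)%:R)).
apply/row_matrixP => x; rewrite row_mul; have [z [-> Hz]] := row_rad x.
rewrite -rowE; apply/rowP => z'; rewrite !mxE Hz nth_uniq ?uniq_basisP //.
Qed.

Lemma delta_sub_rad i v (y : 'I_(size (basisP rels false i v))) :
  nth [::] (basisP rels false i v) y != [::] -> ((delta_mx 0 y : 'rV[K]_(size (basisP rels false i v))) <= rad_incl K rels i v)%MS.
Proof.
move=> Hne.
have Hm : nth [::] (basisP rels false i v) y \in basisP rels true i v.
  by move: (mem_nth [::] (ltn_ord y)); rewrite !mem_basisP => /and4P [-> -> -> _]; rewrite Hne.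
have Hz : (index (nth [::] (basisP rels false i v) y) (basisP rels true i v)
           < size (basisP rels true i v))%N by rewrite index_mem.
have <- : row (Ordinal Hz) (rad_incl K rels i v) = delta_mx 0 y.
  apply/rowP => y'; rewrite !mxE /= nth_index // nth_uniq ?uniq_basisP //.
  by rewrite eq_sym.
exact: row_sub.
Qed.

Lemma supp_sub_rad i v (s : 'rV[K]_(size (basisP rels false i v))) :
  (forall y : 'I_(size (basisP rels false i v)), nth [::] (basisP rels false i v) y = [::] -> s 0 y = 0) ->
  (s <= rad_incl K rels i v)%MS.
Proof.
move=> H; rewrite (row_sum_delta s); apply: summx_sub => y _.
case: (eqVneq (nth [::] (basisP rels false i v) y) [::]) => Hy.
  by rewrite H // scale0r sub0mx.
by apply: scalemx_sub; apply: delta_sub_rad.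
Qed.

Lemma mor_supp rad j a (s : 'rV[K]_(size (basisP rels rad j (src a))))
  (y : 'I_(size (basisP rels rad j (tgt a)))) :
  nth [::] (basisP rels rad j (tgt a)) y = [::] ->
  (s *m mor (prep K rels rad j) a) 0 y = 0.
Proof.
move=> H; rewrite !mxE; apply: big1 => x _; rewrite !mxE H.
by rewrite eq_sym -size_eq0 size_rcons /= mulr0.
Qed.

Lemma not_af i j : j != i -> forall (h : Defs.hom (Pj K rels j) (Pj K rels i)), is_hom h ->
  forall v, (h v <= rad_incl K rels i v)%MS.
Proof.
move=> Hji h Hh v; apply/row_subP => x; apply: supp_sub_rad => y Hy.
have e : i = v.
  by have := mem_nth [::] (ltn_ord y); rewrite Hy mem_basisP => /and4P [_ /eqP e _ _].
subst v.
have Hp := mem_nth [::] (ltn_ord x).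
have Hne : nth [::] (basisP rels false j i) x != [::].
  apply: contraNneq Hji => E; move: Hp; rewrite E mem_basisP => /and4P [_ /eqP -> _ _].
  by [].
have [p' [a Ep]] : exists p' a, nth [::] (basisP rels false j i) x = rcons p' a.
  by move: Hne; case/lastP: (nth _ _ _) => [|p' a] //; exists p', a.
move: Hp; rewrite Ep => Hp.
have := Hp; rewrite mem_basisP is_path_rcons => /and4P [_ /andP [_ /eqP e] _ _].
subst i.
have Hm := basis_prefix2 Hp.
have Hz : (index p' (basisP rels false j (src a)) < size (basisP rels false j (src a)))%N
  by rewrite index_mem.
have Er : row (Ordinal Hz) (mor (Pj K rels j) a) = delta_mx 0 x.
  rewrite /Pj row_mor; apply: rd_in; first exact: uniq_basisP.
  by rewrite /= nth_index.
rewrite rowE -Er -row_mul Hh row_mul.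
exact: mor_supp.
Qed.

Lemma basisP_true i v :
  basisP rels true i v = filter (fun p => p != [::]) (basisP rels false i v).
Proof.
rewrite /basisP -filter_predI; apply: eq_filter => p /=.
by case: (p != [::]); rewrite /= ?andbT ?andbF.
Qed.

Lemma size_rad_lt i : valid_rels rels ->
  (size (basisP rels true i i) < size (basisP rels false i i))%N.
Proof.
move=> Hv; rewrite basisP_true size_filter.
rewrite -(count_predC (fun p : seq A => p != [::]) (basisP rels false i i)) -addn1 leq_add2l.
rewrite -has_count; apply/hasP; exists [::] => //.
rewrite mem_basisP /= eqxx nil_notin_rels //.
Qed.


Lemma flat_eq m (X Y : 'M[K]_(0, m)) : X = Y.
Proof. by rewrite (flatmx0 X) (flatmx0 Y). Qed.

Lemma isMod_zero : isMod rels (zero_rep Q K).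
Proof. by move=> r u w _ _; apply: flat_eq. Qed.

Lemma iso_refl (M : rep Q K) : iso M M.
Proof.
exists (fun v => 1%:M); split; first by move=> a; rewrite mulmx1 mul1mx.
exists (fun v => 1%:M); split => [a|v|v]; by rewrite ?mulmx1 ?mul1mx.
Qed.

Lemma iso_trans (M N P : rep Q K) : iso M N -> iso N P -> iso M P.
Proof.
case=> f [Hf [g [Hg Hfg Hgf]]] [f' [Hf' [g' [Hg' Hfg' Hgf']]]].
exists (fun v => f v *m f' v); split.
  by move=> a; rewrite mulmxA Hf -mulmxA Hf' mulmxA.
exists (fun v => g' v *m g v); split.
- by move=> a; rewrite mulmxA Hg' -mulmxA Hg mulmxA.
- by move=> v; rewrite mulmxA -(mulmxA (f v)) Hfg' mulmx1 Hfg.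
- by move=> v; rewrite mulmxA -(mulmxA (g' v)) Hgf mulmx1 Hgf'.
Qed.

Lemma iso_dsum0r (M : rep Q K) : iso M (dsum M (zero_rep Q K)).
Proof.
exists (fun v => row_mx 1%:M (0 : 'M_(Defs.dim M v, 0))); split.
  move=> a /=; rewrite mul_row_block mul_mx_row.
  by rewrite ?mulmx1 ?mul1mx ?mulmx0 ?mul0mx ?addr0.
exists (fun v => col_mx 1%:M (0 : 'M_(0, Defs.dim M v))); split.
- move=> a /=; rewrite mul_block_col mul_col_mx.
  by rewrite ?mulmx1 ?mul1mx ?mulmx0 ?mul0mx ?addr0.
- by move=> v; rewrite mul_row_col mulmx1 mulmx0 addr0.
- move=> v; rewrite mul_col_row (scalar_mx_block (Defs.dim M v) 0).
  rewrite ?mulmx1 ?mulmx0 ?mul0mx ?mul1mx; congr block_mx; exact: flat_eq.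
Qed.


Lemma th0_iso (M : rep Q K) :
  @iso_map Q K (dsum (zero_rep Q K) M) M
    (fun v => col_mx (0 : 'M_(0, Defs.dim M v)) 1%:M).
Proof.
split.
  move=> a /=; rewrite mul_block_col mul_col_mx.
  by rewrite ?mulmx1 ?mul1mx ?mulmx0 ?mul0mx ?add0r ?addr0.
exists (fun v => row_mx (0 : 'M_(Defs.dim M v, 0)) 1%:M); split.
- move=> a /=; rewrite mul_row_block mul_mx_row.
  by rewrite ?mulmx1 ?mul1mx ?mulmx0 ?mul0mx ?add0r ?addr0.
- move=> v; rewrite mul_col_row [RHS](scalar_mx_block 0 (Defs.dim M v)).
  rewrite ?mulmx1 ?mulmx0 ?mul0mx ?mul1mx; congr block_mx; exact: flat_eq.
- by move=> v; rewrite mul_row_col mulmx1 mulmx0 add0r.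
Qed.

Lemma iso_dsum0l (M : rep Q K) : iso M (dsum (zero_rep Q K) M).
Proof.
exists (fun v => row_mx (0 : 'M_(Defs.dim M v, 0)) 1%:M); split.
  move=> a /=; rewrite mul_row_block mul_mx_row.
  by rewrite ?mulmx1 ?mul1mx ?mulmx0 ?mul0mx ?add0r ?addr0.
exists (fun v => col_mx (0 : 'M_(0, Defs.dim M v)) 1%:M); split.
- have [H _] := th0_iso M; exact: H.
- by move=> v; rewrite mul_row_col mulmx1 mulmx0 add0r.
- move=> v; rewrite mul_col_row [RHS](scalar_mx_block 0 (Defs.dim M v)).
  rewrite ?mulmx1 ?mulmx0 ?mul0mx ?mul1mx; congr block_mx; exact: flat_eq.
Qed.

End S.

Theorem lemma3p6 (K : fieldType) (Q : quiver) (rels : seq (seq (arr Q)))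
    (i : vert Q) :
  valid_rels rels ->
  string_alg rels ->
  is_tree Q ->
  #|[set a : arr Q | src a == i]| = 1%N ->
  @isC Q K rels _ _ (@rad_incl Q K rels i) (@Pj Q K rels i).
Proof.
move=> Hv _ _ _.
set R := radP K rels i.
have FE : forall v,
   hcomp (@inr_h Q K (zero_rep Q K) R)
     (hcomp (fun v => col_mx (0 : 'M_(0, Defs.dim R v)) 1%:M : 'M_(0 + Defs.dim R v, Defs.dim R v))
        (@rad_incl Q K rels i)) v = rad_incl K rels i v.
  move=> v; rewrite /hcomp /inr_h mulmxA mul_row_col mulmx0 add0r mulmx1 mul1mx //.
exists (zero_rep Q K); split.
  exists (zero_rep Q K), R,
    (fun v => col_mx (0 : 'M_(0, Defs.dim R v)) 1%:M : 'M_(0 + Defs.dim R v, Defs.dim R v)).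
  split.
  - split; [exact: isMod_zero | exact: isMod_prep | exact: th0_iso].
  - by move=> v; apply: flat_eq.
  - move=> phi _ Hphi v; have := Hphi v; rewrite FE => H.
    have -> : phi v = 1%:M.
      apply: (row_free_inj (rad_row_free K rels i v)).
      by rewrite /= H mul1mx.
    exact: unitmx1.
  - split; first exact: isMod_zero.
    exists (fun v => (0 : 'M[K]_(0, Defs.dim R v))); split.
    + by move=> a; apply: flat_eq.
    + by move=> v; rewrite /row_free mxrank0.
    + move=> v; rewrite FE.
      have -> : kermx (rad_incl K rels i v) = 0.
        by apply/eqP; rewrite kermx_eq0 rad_row_free.
      by rewrite !sub0mx.
exists [::], [::], [:: i]; split.
- by split => // k.
- exact: iso_refl.
- by [].
- move=> j; split.
    rewrite inE => /eqP ->.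
    exists (fun v => 1%:M), (fun v => 1%:M); split.
    + by move=> a; rewrite mulmx1 mul1mx.
    + by move=> a; rewrite mulmx1 mul1mx.
    + by move=> v; rewrite mulmx1 mul1mx.
    + move=> H; have := H i; rewrite sub1mx /row_full => /eqP Hr.
      have := rank_leq_row (rad_incl K rels i i); rewrite Hr => Hle.
      by have := size_rad_lt i Hv; rewrite ltnNge Hle.
  case=> h [g [Hh _ _ Hn]].
  case: (eqVneq j i) => [->|Hji]; first by rewrite inE eqxx.
  by exfalso; apply: Hn; exact: not_af Hji h Hh.
- rewrite /=; apply: iso_trans (iso_dsum0r _) (iso_dsum0l _).
Qed.
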